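(* Let $U:\mathbb{N}\to\mathbb{N}$ be any function with $U(x)\ge p_{x+1}-1$ for all integers $x\ge 0$. For integers $j\ge 2$ define \[ I(j)=\left\lfloor \frac{1}{1+\sum_{k=2}^{j-1}\left\lfloor \frac{\gcd(k,j)}{k}\right\rfloor}\right\rfloor, \] for integers $i\ge 1$ define $S(i)=\sum_{j=2}^{i} I(j)$ (so $S(1)=0$), for integers $i\ge 1$, $x\ge 0$ define \[ A(i,x)=\left\lfloor \frac{1}{1+\left\lfloor \frac{S(i)}{x+1}\right\rfloor}\right\rfloor, \] and define $f_{U}(x)=1+\sum_{i=1}^{U(x)} A(i,x)$. Then for every integer $x\ge 0$, $f_{U}(x)=p_{x+1}$.
   Context: $\mathbb{N}=\{0,1,2,\dots\}$. $p_n$ denotes the $n$-th prime ($p_1=2$, $p_2=3,\dots$). $\lfloor\cdot\rfloor$ is the floor function and $\gcd$ the usual greatest common divisor; empty sums are $0$. *)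

(* Defs.v *)
(* all quantities are natural numbers; since every quantity
   is nonnegative, nat division m %/ d is exactly floor(m/d) for d > 0. *)
From mathcomp Require Import all_boot.
Set Implicit Arguments. Unset Strict Implicit. Unset Printing Implicit Defensive.

Lemma exists_prime_above (m : nat) : exists p, (m < p) && prime p.
Proof. case: (prime_above m) => p Hmp Hp; exists p; by rewrite Hmp Hp. Qed.

Definition next_prime (m : nat) : nat := ex_minn (exists_prime_above m).

(* nth_prime n = p_n, with p_1 = 2, p_2 = 3, ...  (nth_prime 0 = 0 is a dummy) *)
Fixpoint nth_prime (n : nat) : nat :=
  match n with
  | 0 => 0
  | k.+1 => next_prime (nth_prime k)
  end.

Definition I_fn (j : nat) : nat :=
  1 %/ (1 + \sum_(2 <= k < j) (gcdn k j %/ k)).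

Definition S_fn (i : nat) : nat := \sum_(2 <= j < i.+1) I_fn j.

Definition A_fn (i x : nat) : nat := 1 %/ (1 + S_fn i %/ x.+1).

Definition f_U (U : nat -> nat) (x : nat) : nat :=
  1 + \sum_(1 <= i < (U x).+1) A_fn i x.

(* Main.v *)
Require Import Defs.
From mathcomp Require Import all_boot.

Lemma div1_eq (s : nat) : 1 %/ (1 + s) = (s == 0).
Proof. case: s => [|s] //=; rewrite divn_small. Qed.

Lemma term_eq (k j : nat) : 0 < k -> (gcdn k j %/ k == 0) = ~~ (k %| j).
Proof.
move=> k0; case: (boolP (k %| j)) => H.
  by move/gcdn_idPl: H => ->; rewrite divnn k0.
rewrite divn_small //; rewrite ltn_neqAle dvdn_leq ?dvdn_gcdl // andbT.
by apply/negP => /eqP E; move: H; rewrite -E dvdn_gcdr.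
Qed.

Lemma I_prime (j : nat) : 1 < j -> I_fn j = prime j.
Proof.
move=> j1; rewrite /I_fn div1_eq sum_nat_seq_eq0.
have -> : all (fun i => true ==> (gcdn i j %/ i == 0)) (index_iota 2 j)
        = all (fun k => ~~ (k %| j)) (index_iota 2 j).
  apply: eq_in_all => k; rewrite mem_index_iota => /andP [k2 _] /=.
  by rewrite term_eq // ltnW.
congr nat_of_bool; apply/idP/idP.
  move/allP => H; apply/primeP; split => // d dj.
  have d0 : 0 < d by apply: dvdn_gt0 dj; apply: ltnW.
  have dle : d <= j by apply: dvdn_leq (ltnW j1) dj.
  rewrite /=; case: (boolP (d == 1)) => //= d1.
  case: (boolP (d == j)) => // dj'.
  have : d \in index_iota 2 j.
    rewrite mem_index_iota; apply/andP; split.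
      by rewrite ltn_neqAle eq_sym d1 d0.
    by rewrite ltn_neqAle dj' dle.
  by move/H; rewrite dj.
move/primeP => [_ H]; apply/allP => k; rewrite mem_index_iota => /andP [k2 kj].
apply/negP => /H /orP [] /eqP E; move: k2 kj; rewrite E //.
by rewrite ltnn.
Qed.

Lemma next_primeP (m : nat) :
  [/\ m < next_prime m, prime (next_prime m) &
      forall q, m < q -> q < next_prime m -> ~~ prime q].
Proof.
rewrite /next_prime; case: ex_minnP => p /andP [mp pp] Hmin; split => //.
move=> q mq qp; apply/negP => pq.
by have := Hmin q; rewrite mq pq => /(_ isT); rewrite leqNgt qp.
Qed.

Lemma S_succ (i : nat) : S_fn i.+1 = S_fn i + prime i.+1.
Proof.
case: i => [|i]; first by rewrite /S_fn !big_geq.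
rewrite /S_fn [in LHS]big_nat_recr //= I_prime //.
Qed.

Lemma S_mono (i k : nat) : i <= k -> S_fn i <= S_fn k.
Proof.
move=> /subnK <-; elim: (k - i) => [|n IH] //.
by rewrite addSn S_succ (leq_trans IH) ?leq_addr.
Qed.

Lemma S_between (n : nat) :
  S_fn (nth_prime n) = n /\
  forall i, nth_prime n <= i -> i < nth_prime n.+1 -> S_fn i = n.
Proof.
have step : forall n, S_fn (nth_prime n) = n ->
   forall i, nth_prime n <= i -> i < nth_prime n.+1 -> S_fn i = n.
  move=> m Hm i; move=> /subnK <-; elim: (i - nth_prime m) => [|d IH] //= Hlt.
  rewrite addSn S_succ IH; last by apply: ltnW.
  have [h1 _ h3] := next_primeP (nth_prime m).
  rewrite addSn in Hlt; rewrite (negbTE (h3 _ _ Hlt)) ?addn0 //.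
  by rewrite ltnS leq_addl.
elim: n => [|n [IH1 IH2]]; first by split; [rewrite /S_fn big_geq | apply: step; rewrite /S_fn big_geq].
suff E : S_fn (nth_prime n.+1) = n.+1 by split => //; apply: step.
have [h1 h2 _] := next_primeP (nth_prime n).
rewrite /= -(prednK (prime_gt0 h2)) S_succ prednK ?prime_gt0 // h2 IH2 ?addn1 //.
  by rewrite -ltnS prednK ?prime_gt0.
by rewrite prednK ?prime_gt0.
Qed.

Lemma S_le (x i : nat) : (S_fn i <= x) = (i < nth_prime x.+1).
Proof.
case: (ltnP i (nth_prime x.+1)) => H.
  elim: x i H => [|x IH] i H.
    have [_ F] := S_between 0.
    by rewrite F.
  case: (ltnP i (nth_prime x.+1)) => H2.
    by rewrite (leq_trans (IH _ H2)).
  have F := proj2 (S_between x.+1).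
  by rewrite (F i H2 H) leqnn.
have E := proj1 (S_between x.+1).
have K : x.+1 <= S_fn i by rewrite -{1}E S_mono.
by rewrite leqNgt K.
Qed.

Theorem mainTheorem1 (U : nat -> nat)
  (hU : forall x : nat, nth_prime x.+1 - 1 <= U x) :
  forall x : nat, f_U U x = nth_prime x.+1.
Proof.
move=> x; rewrite /f_U.
have [_ pp _] := next_primeP (nth_prime x).
set p := nth_prime x.+1 in hU pp *.
have p1 : 1 <= p by apply: prime_gt0.
have hp : 1 <= p <= (U x).+1.
  have := hU x; rewrite -ltnS -[(p - 1).+1]addn1 subnK // => h.
  by rewrite p1 h.
case/andP: hp => _ hp.
rewrite (@big_cat_nat _ _ _ p) //=.
rewrite (@eq_big_nat _ _ _ 1 p _ (fun _ => 1)); last first.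
  move=> i /andP [_ ip]; by rewrite /A_fn (div1_eq (S_fn i %/ x.+1)) eqn0Ngt divn_gt0 // -ltnNge ltnS S_le ip.
rewrite (@eq_big_nat _ _ _ p (U x).+1 _ (fun _ => 0)); last first.
  move=> i /andP [pi _]; rewrite /A_fn (div1_eq (S_fn i %/ x.+1)) eqn0Ngt divn_gt0 // -ltnNge ltnS S_le.
  by rewrite ltnNge pi.
rewrite !sum_nat_const_nat muln1 muln0 addn0 addnC subnK //.
Qed.
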